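(* Let $C$ be an $[n,k,d]$ and $C'$ an $[n',k',d']$ linear code over $\mathbb{F}_q$, let $x \in C \times C'$, $e \in \mathbb{F}_q^{n \times n'}$ and $y = x + e$. Perform the column decoding of $y$ described in the context, obtaining $\hat{x}$, the reliability weights $\alpha_1,\dots,\alpha_{n'}$ and the set $I_E$. Suppose that $$2\sum_{j=1}^{n'} \min\{ w(e_j), d\} < d\, d'$$ (in particular this holds whenever $2w(e) < d d'$). Then $$\sum_{j \in [n'] \setminus I_E} \alpha_j \;-\; \sum_{j \in I_E} \alpha_j \;>\; n' - d',$$ and consequently, for every row index $i \in [n]$, $$\sum_{j=1}^{n'} \alpha_j \,(-1)^{w(\hat{x}_{ij} - x_{ij})} \;>\; n' - d',$$ where $w(\hat{x}_{ij} - x_{ij})$ is $0$ if $\hat{x}_{ij} = x_{ij}$ and $1$ otherwise.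
   Context: The product code $C \times C'$ consists of the matrices $G^T X G'$ for $X \in \mathbb{F}_q^{k\times k'}$, where $G, G'$ are generator matrices of $C, C'$; equivalently its elements are the $n \times n'$ matrices all of whose columns lie in $C$ and all of whose rows lie in $C'$. For a matrix $b$, $b_j$ denotes its $j$-th column and $b^i$ its $i$-th row; $w(\cdot)$ is Hamming weight. Let $t = \lfloor (d-1)/2 \rfloor$. Column decoding: each column $y_j$ ($j \in [n']$) is decoded by a bounded-distance decoder for $C$, which returns the unique codeword of $C$ at Hamming distance at most $t$ from $y_j$ if one exists, and otherwise declares failure. If decoding succeeds with output $\hat{x}_j$, set $\hat{e}_j = y_j - \hat{x}_j$ and $\alpha_j = (d - 2 w(\hat{e}_j))/d$; if it fails, set $\hat{x}_j = y_j$ and $\alpha_j = 0$. Let $\hat{x}$ be the matrix with columns $\hat{x}_j$. Let $I_E \subseteq [n']$ be the set of indices $j$ for which column decoding failed or $\hat{x}_j \neq x_j$. *)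

(* Defs.v *)
From HB Require Import structures.
From mathcomp Require Import all_boot all_order all_algebra all_fingroup all_field.
Set Implicit Arguments. Unset Strict Implicit. Unset Printing Implicit Defensive.
Import Order.TTheory GRing.Theory Num.Theory.
Local Open Scope ring_scope.

(* Linear codes of length n over a finite field F are represented by a
   generator matrix G : 'M[F]_(k, n); codewords are the row vectors in the
   row space of G. *)

Section Codes.
Variable F : finFieldType.

Definition wt (n : nat) (v : 'rV[F]_n) : nat := #|[set i | v 0 i != 0]|.

Definition in_code (k n : nat) (G : 'M[F]_(k, n)) (c : 'rV[F]_n) : bool :=
  (c <= G)%MS.

(* G generates an [n,k,d] linear code: k linearly independent generators,
   minimum distance (= minimum weight of a nonzero codeword) equal to d. *)
Definition is_code (k n d : nat) (G : 'M[F]_(k, n)) : Prop :=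
  [/\ \rank G = k,
      (exists2 c, in_code G c & (c != 0) && (wt c == d)) &
      (forall c, in_code G c -> c != 0 -> (d <= wt c)%N)].

Definition colv (n n' : nat) (y : 'M[F]_(n, n')) (j : 'I_n') : 'rV[F]_n :=
  (col j y)^T.

(* Product code C x C': all columns in C and all rows in C'. *)
Definition in_product_code (k n k' n' : nat) (G : 'M[F]_(k, n))
  (G' : 'M[F]_(k', n')) (x : 'M[F]_(n, n')) : bool :=
  [forall j, in_code G (colv x j)] && [forall i, in_code G' (row i x)].

(* Bounded-distance decoder with radius t: the codeword within distance t
   (unique when t = floor((d-1)/2)), or None (failure). *)
Definition bdd_decode (k n : nat) (G : 'M[F]_(k, n)) (t : nat)
  (v : 'rV[F]_n) : option 'rV[F]_n :=
  [pick c : 'rV[F]_n | in_code G c && (wt (v - c) <= t)%N].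

Definition dec_col (k n : nat) (G : 'M[F]_(k, n)) (d : nat) (v : 'rV[F]_n)
  : 'rV[F]_n :=
  match bdd_decode G (d.-1 %/ 2) v with Some c => c | None => v end.

Definition rel_weight (k n : nat) (G : 'M[F]_(k, n)) (d : nat) (v : 'rV[F]_n)
  : rat :=
  match bdd_decode G (d.-1 %/ 2) v with
  | Some c => ((d%:Q - 2%:Q * (wt (v - c))%:Q) / d%:Q)
  | None => 0
  end.

Definition dec_mx (k n n' : nat) (G : 'M[F]_(k, n)) (d : nat)
  (y : 'M[F]_(n, n')) : 'M[F]_(n, n') :=
  \matrix_(i < n, j < n') (dec_col G d (colv y j)) 0 i.

Definition err_set (k n n' : nat) (G : 'M[F]_(k, n)) (d : nat)
  (x y : 'M[F]_(n, n')) : {set 'I_n'} :=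
  [set j | match bdd_decode G (d.-1 %/ 2) (colv y j) with
           | None => true
           | Some c => c != colv x j
           end].

End Codes.

(* Main.v *)
Require Import Defs.
From HB Require Import structures.
From mathcomp Require Import all_boot all_order all_algebra all_fingroup all_field.
From mathcomp Require Import zify ring lra.
Import Order.TTheory GRing.Theory Num.Theory.
Local Open Scope ring_scope.

Section Helpers.
Variable F : finFieldType.

Lemma wtD (n : nat) (a b : 'rV[F]_n) : (wt (a + b) <= wt a + wt b)%N.
Proof.
rewrite /wt; apply: leq_trans (leq_card_setU _ _).
apply: subset_leq_card; apply/subsetP => i; rewrite !inE mxE.
case: (eqVneq (a 0 i) 0) => [->|] //=; by rewrite add0r.
Qed.

Lemma wtN (n : nat) (a : 'rV[F]_n) : wt (- a) = wt a.
Proof. by rewrite /wt; apply: eq_card => i; rewrite !inE mxE oppr_eq0. Qed.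

Lemma wtB (n : nat) (a b : 'rV[F]_n) : (wt (a - b) <= wt a + wt b)%N.
Proof. by rewrite -(wtN _ b); apply: wtD. Qed.

Lemma in_codeB k n (G : 'M[F]_(k, n)) a b :
  in_code G a -> in_code G b -> in_code G (a - b).
Proof.
rewrite /in_code => Ha Hb; apply: addmx_sub => //.
by rewrite -scaleN1r; apply: scalemx_sub.
Qed.

Lemma col_key k n d (G : 'M[F]_(k, n)) (HC : is_code d G) (d0 : (0 < d)%N)
  (v e : 'rV[F]_n) (Hv : in_code G v) :
  let a := rel_weight G d (v + e) in
  let b := match bdd_decode G (d.-1 %/ 2) (v + e) with
           | None => true | Some c => c != v end in
  [/\ 1 - 2%:Q * (minn (wt e) d)%:Q / d%:Q <= (if b then - a else a),
      0 <= a & (~~ b -> dec_col G d (v + e) = v)].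
Proof.
case: HC => _ _ Hmin.
have D0 : d%:Q != 0 by rewrite pnatr_eq0 -lt0n.
have Dp : 0 < d%:Q by rewrite ltr0n.
rewrite /rel_weight /dec_col /bdd_decode /=.
case: pickP => [c /andP[Hc Hs] | Hnone].
- set s := wt (v + e - c) in Hs *.
  have s2 : (2 * s < d)%N by move: Hs; lia.
  have s2Q : 2%:Q * s%:Q <= d%:Q by rewrite -natrM ler_nat; lia.
  have a0 : 0 <= (d%:Q - 2%:Q * s%:Q) / d%:Q.
    by apply: divr_ge0; [rewrite subr_ge0 | apply: ltW].
  have vev : v + e - v = e by rewrite addrAC subrr add0r.
  case: eqP => [Ecv | /eqP Hcv] /=.
  + split; [| done | by move=> _; rewrite Ecv].
    rewrite /s Ecv vev in Hs *.
    have -> : minn (wt e) d = wt e by apply/minn_idPl; lia.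
    by rewrite mulrBl divff // mulrA.
  + split => //.
    have Hcv' : c - v != 0 by rewrite subr_eq0.
    have Hd := Hmin _ (@in_codeB _ _ G _ _ Hc Hv) Hcv'.
    have Hw : (wt (c - v) <= wt e + s)%N.
      have -> : c - v = e - (v + e - c) by apply/rowP => i; rewrite !mxE; ring.
      exact: wtB.
    have Hm : (d <= minn (wt e) d + s)%N by clearbody s; move: Hd Hw; set W := wt (c - v); lia.
    have HmQ : d%:Q <= (minn (wt e) d)%:Q + s%:Q by rewrite -natrD ler_nat.
    move: HmQ D0 Dp; set m := (minn _ _)%:Q; set sQ := s%:Q; set D := d%:Q => HmQ D0 Dp.
    rewrite -(ler_pM2r Dp).
    have -> : (1 - 2%:Q * m / D) * D = D - 2%:Q * m by field.
    have -> : (- ((D - 2%:Q * sQ) / D)) * D = 2%:Q * sQ - D by field.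
    lra.
- split => //=.
  have := Hnone v; rewrite Hv /= addrAC subrr add0r => /negbT; rewrite -ltnNge => Ht.
  have Hm : (d <= 2 * minn (wt e) d)%N by move: Ht; lia.
  have HmQ : d%:Q <= 2%:Q * (minn (wt e) d)%:Q by rewrite -natrM ler_nat.
  move: HmQ D0 Dp; set m := (minn _ _)%:Q; set D := d%:Q => HmQ D0 Dp.
  rewrite oppr0 -(ler_pM2r Dp) mul0r.
  have -> : (1 - 2%:Q * m / D) * D = D - 2%:Q * m by field.
  lra.
Qed.

End Helpers.

Theorem mainTheorem2 (F : finFieldType) (n k d n' k' d' : nat)
  (G : 'M[F]_(k, n)) (G' : 'M[F]_(k', n'))
  (HC : is_code d G) (HC' : is_code d' G')
  (x e : 'M[F]_(n, n'))
  (Hx : in_product_code G G' x)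
  (Hw : (2 * (\sum_(j < n') minn (wt (colv e j)) d) < d * d')%N) :
  let y := x + e in
  let alpha := fun j : 'I_n' => rel_weight G d (colv y j) in
  let IE := err_set G d x y in
  let xhat := dec_mx G d y in
  (\sum_(j < n' | j \notin IE) alpha j - \sum_(j in IE) alpha j
     > n'%:Q - d'%:Q)
  /\ (forall i : 'I_n,
        \sum_(j < n') alpha j * (-1) ^+ (xhat i j != x i j)
          > n'%:Q - d'%:Q).
Proof.
move=> y alpha IE xhat.
have d0 : (0 < d)%N by move: Hw; case: (posnP d) => [->|] //; rewrite mul0n.
have Dp : 0 < d%:Q by rewrite ltr0n.
move/andP: Hx => [/forallP Hxc _].
have Hcol j : colv y j = colv x j + colv e j.
  by apply/rowP => i; rewrite !mxE.
pose beta j := if j \in IE then - alpha j else alpha j.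
have Hk j : [/\ 1 - 2%:Q * (minn (wt (colv e j)) d)%:Q / d%:Q <= beta j,
      0 <= alpha j & (j \notin IE -> dec_col G d (colv y j) = colv x j)].
  have := @col_key F _ _ _ G HC d0 (colv x j) (colv e j) (Hxc j).
  by rewrite /beta /alpha /IE /err_set inE Hcol.
have Hsplit : \sum_(j < n' | j \notin IE) alpha j - \sum_(j in IE) alpha j
    = \sum_j beta j.
  rewrite [RHS](bigID (fun j => j \in IE)) /= [RHS]addrC -sumrN; congr (_ + _).
    by apply: eq_bigr => j /negbTE Hj; rewrite /beta Hj.
  by apply: eq_bigr => j Hj; rewrite /beta Hj.
have Hbeta : n'%:Q - d'%:Q < \sum_j beta j.
  have Hle : \sum_(j < n') (1 - 2%:Q * (minn (wt (colv e j)) d)%:Q / d%:Q) <= \sum_j beta j.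
    by apply: ler_sum => j _; case: (Hk j).
  apply: (lt_le_trans _ Hle).
  have HwQ : 2%:Q * ((\sum_(j < n') minn (wt (colv e j)) d)%N)%:Q < d%:Q * d'%:Q.
    by rewrite -!natrM ltr_nat.
  rewrite (big_morph (fun m : nat => m%:Q) (@natrD _) (mulr0n (1 : rat))) in HwQ.
  rewrite sumrB sumr_const card_ord -mulr_suml -mulr_sumr.
  rewrite ltrD2l ltrN2 ltr_pdivrMr // [_ * d%:Q]mulrC.
  exact: HwQ.
split; first by rewrite Hsplit.
move=> i; apply: (lt_le_trans Hbeta); apply: ler_sum => j _.
case: (Hk j) => _ a0 Hd; rewrite /beta.
case: (boolP (j \in IE)) => Hj.
  case: (xhat i j != x i j).
    by rewrite expr1 mulrN1.
  by rewrite expr0 mulr1; lra.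
have -> : xhat i j = x i j.
  by rewrite /xhat /dec_mx mxE (Hd Hj) !mxE.
by rewrite eqxx expr0 mulr1.
Qed.
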